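(* Consider the problem and algorithm AC2CD described in the context (including the additional requirement on $A^{k,i}$). For every stationary point $x^*$ and every inner iteration $(k,i)$, \[ g^{k,i}\bigl(x^*_{p^k_i}-z^{k,i+1}_{p^k_i}\bigr)\le \max\Bigl\{\frac1{A_l},\frac{L^{\max}}{2\delta(1-\gamma)}\Bigr\}\,\bigl|z^{k,i+1}_{p^k_i}-z^{k,i}_{p^k_i}\bigr|\,\bigl|x^*_{p^k_i}-z^{k,i+1}_{p^k_i}\bigr|. \]
   Context: Problem: minimize $f(x)$ subject to $e^T x = b$ and $l_i \le x_i \le u_i$ ($i=1,\dots,n$), where $n\ge 2$, $e$ is the all-ones vector, $b\in\mathbb{R}$, $l_i\in\mathbb{R}\cup\{-\infty\}$, $u_i\in\mathbb{R}\cup\{+\infty\}$, $l_i<u_i$, and $f:\mathbb{R}^n\to\mathbb{R}$ is continuously differentiable with $\nabla f$ Lipschitz continuous on $\mathbb{R}^n$. $\mathcal F$ is the feasible set, $e_i$ the $i$th unit vector. For $i\ne j$, $L_{i,j}>0$ are fixed constants such that for every $x\in\mathbb{R}^n$ and $s,t\in\mathbb{R}$, $|\nabla f(x+s(e_i-e_j))^T(e_i-e_j)-\nabla f(x+t(e_i-e_j))^T(e_i-e_j)|\le L_{i,j}|s-t|$; $L_{i,i}=0$; $L^{\max}=\max_{i,j}L_{i,j}$. For $x\in\mathcal F$, $D_h(x)=\min\{x_h-l_h,u_h-x_h\}$. A point $x^*\in\mathcal F$ is stationary iff there is $\lambda^*\in\mathbb{R}$ with $\nabla_i f(x^* )\ge\lambda^*$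 if $x^*_i=l_i$, $=\lambda^*$ if $l_i<x^*_i<u_i$, $\le\lambda^*$ if $x^*_i=u_i$. Algorithm AC2CD with parameters $\tau\in(0,1]$, $\gamma,\delta\in(0,1)$, $0<A_l\le A_u<\infty$ and starting point $x^0\in\mathcal F$: for $k=0,1,2,\dots$: let $D^k=\max_h D_h(x^k)$; choose $j(k)$ with $D_{j(k)}(x^k)\ge\tau D^k$; choose a permutation $(p^k_1,\dots,p^k_n)$ of $\{1,\dots,n\}$; set $z^{k,1}=x^k$; for $i=1,\dots,n$ (inner iteration $(k,i)$): $g^{k,i}=\nabla_{j(k)}f(z^{k,i})-\nabla_{p^k_i}f(z^{k,i})$, $d^{k,i}=g^{k,i}(e_{p^k_i}-e_{j(k)})$; $\bar\alpha^{k,i}=\min\{u_{p^k_i}-z^{k,i}_{p^k_i},z^{k,i}_{j(k)}-l_{j(k)}\}/g^{k,i}$ if $g^{k,i}>0$, $=\min\{z^{k,i}_{p^k_i}-l_{p^k_i},u_{j(k)}-z^{k,i}_{j(k)}\}/|g^{k,i}|$ if $g^{k,i}<0$, $=0$ if $g^{k,i}=0$; choose $A^{k,i}\in[A_l,A_u]$, set $\Delta^{k,i}=\min\{\bar\alpha^{k,i},A^{k,i}\}$; starting from $\alpha=\Delta^{k,i}$, while $f(z^{k,i}+\alpha d^{k,i})>f(z^{k,i})+\gamma\alpha\nabla f(z^{k,i})^Td^{k,i}$ replace $\alpha$ by $\delta\alpha$; $\alpha^{k,i}$ is the final $\alpha$ and $z^{k,i+1}=z^{k,i}+\alpha^{k,i}d^{k,i}$.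 Then $x^{k+1}=z^{k,n+1}$. Additional requirement: the values $A^{k,i}\in[A_l,A_u]$ are chosen so that $l_{j(k)}<z^{k,i}_{j(k)}<u_{j(k)}$ for all $k\ge0$ and $i=1,\dots,n+1$. Standing assumptions: $\mathcal L_0=\{x\in\mathcal F: f(x)\le f(x^0)\}$ is nonempty and compact, and every $x\in\mathcal L_0$ has some index $i$ with $l_i<x_i<u_i$. *)

(* Defs.v *)
From HB Require Import structures.
From mathcomp Require Import all_boot all_order all_algebra all_fingroup.
From mathcomp Require Import all_classical all_reals all_analysis.
Set Implicit Arguments. Unset Strict Implicit. Unset Printing Implicit Defensive.
Import Order.TTheory GRing.Theory Num.Theory.
Import numFieldNormedType.Exports.
Local Open Scope ring_scope.

Section AC2CD.
Variables (R : realType) (n : nat).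

Definition uvec (i : 'I_n) : 'rV[R]_n := delta_mx 0 i.

Definition grad (f : 'rV[R]_n -> R) (x : 'rV[R]_n) : 'rV[R]_n :=
  \row_h ('D_(uvec h) f x).

Definition dot (v w : 'rV[R]_n) : R := \sum_(h < n) v 0 h * w 0 h.

Definition feasible (l u : 'I_n -> \bar R) (b : R) (x : 'rV[R]_n) : Prop :=
  \sum_(h < n) x 0 h = b /\ forall h, (l h <= (x 0 h)%:E <= u h)%E.

Definition stationary (f : 'rV[R]_n -> R) (l u : 'I_n -> \bar R) (b : R)
  (xs : 'rV[R]_n) : Prop :=
  feasible l u b xs /\
  exists lam : R, forall h,
    ((xs 0 h)%:E = l h -> grad f xs 0 h >= lam) /\
    ((l h < (xs 0 h)%:E < u h)%E -> grad f xs 0 h = lam) /\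
    ((xs 0 h)%:E = u h -> grad f xs 0 h <= lam).

Definition Dh (l u : 'I_n -> \bar R) (x : 'rV[R]_n) (h : 'I_n) : \bar R :=
  Order.min ((x 0 h)%:E - l h)%E (u h - (x 0 h)%:E)%E.

Definition Dmax (l u : 'I_n -> \bar R) (x : 'rV[R]_n) : \bar R :=
  (\big[Order.max/-oo]_(h < n) Dh l u x h)%E.

Definition gdir (f : 'rV[R]_n -> R) (z : 'rV[R]_n) (j p : 'I_n) : R :=
  grad f z 0 j - grad f z 0 p.

Definition ddir (f : 'rV[R]_n -> R) (z : 'rV[R]_n) (j p : 'I_n) : 'rV[R]_n :=
  gdir f z j p *: (uvec p - uvec j).

(* maximal feasible stepsize \bar alpha (possibly +oo) *)
Definition abar (f : 'rV[R]_n -> R) (l u : 'I_n -> \bar R) (z : 'rV[R]_n)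
  (j p : 'I_n) : \bar R :=
  let g := gdir f z j p in
  if 0 < g then
    (Order.min (u p - (z 0 p)%:E) ((z 0 j)%:E - l j) * (g^-1)%:E)%E
  else if g < 0 then
    (Order.min ((z 0 p)%:E - l p) (u j - (z 0 j)%:E) * (`|g|^-1)%:E)%E
  else 0%E.

(* Delta = min{abar, A} (finite since A is finite) *)
Definition Delta (f : 'rV[R]_n -> R) (l u : 'I_n -> \bar R) (z : 'rV[R]_n)
  (j p : 'I_n) (A : R) : R :=
  fine (Order.min (abar f l u z j p) A%:E).

(* Armijo acceptance test (the negation of the while-condition) *)
Definition armijo (f : 'rV[R]_n -> R) (gamma : R) (z d : 'rV[R]_n) (a : R)
  : Prop :=
  f (z + a *: d) <= f z + gamma * a * dot (grad f z) d.

Definition linesearch (f : 'rV[R]_n -> R) (gamma delta : R) (z d : 'rV[R]_n)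
  (Dl a : R) : Prop :=
  exists m : nat, a = delta ^+ m * Dl /\ armijo f gamma z d a /\
    forall m' : nat, (m' < m)%N -> ~ armijo f gamma z d (delta ^+ m' * Dl).

(* A run of AC2CD.  Inner iterations are 0-based: inner iteration (k,i+1) of
   the paper is (k,i) with i : 'I_n, and z k i (i = 0..n) is z^{k,i+1} of the
   paper; so z k 0 = x^k and x^{k+1} = z k n. *)
Definition AC2CD_run (f : 'rV[R]_n -> R) (l u : 'I_n -> \bar R)
  (tau gamma delta Al Au : R)
  (x : nat -> 'rV[R]_n) (jk : nat -> 'I_n) (p : nat -> {perm 'I_n})
  (A : nat -> nat -> R) (alpha : nat -> nat -> R)
  (z : nat -> nat -> 'rV[R]_n) : Prop :=
  (forall k, z k 0%N = x k) /\
  (forall k, x k.+1 = z k n) /\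
  (forall k, (tau%:E * Dmax l u (x k) <= Dh l u (x k) (jk k))%E) /\
  (forall k (i : 'I_n), Al <= A k i <= Au) /\
  (forall k (i : 'I_n),
     linesearch f gamma delta (z k i) (ddir f (z k i) (jk k) (p k i))
       (Delta f l u (z k i) (jk k) (p k i) (A k i)) (alpha k i)) /\
  (forall k (i : 'I_n),
     z k i.+1 = z k i + alpha k i *: ddir f (z k i) (jk k) (p k i)).

End AC2CD.
Arguments uvec {R n}.

(* Main.v *)
Require Import Defs.
From HB Require Import structures.
From mathcomp Require Import all_boot all_order all_algebra all_fingroup.
From mathcomp Require Import all_classical all_reals all_analysis.
From mathcomp Require Import ring lra.
Import Order.TTheory GRing.Theory Num.Theory.
Import numFieldNormedType.Exports.
Local Open Scope classical_set_scope.
Local Open Scope ring_scope.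

Lemma phi_derive (R : realType) n (f : 'rV[R]_n -> R) (y v : 'rV[R]_n) (t : R) :
  differentiable f (y + t *: v) ->
  is_derive t 1 (fun s => f (y + s *: v)) ('d f (y + t *: v) v).
Proof.
move=> df.
have E : (fun h : R => h^-1 *: (((fun s => f (y + s *: v)) \o shift t) (h *: 1) - f (y + t *: v)))
  = (fun h : R => h^-1 *: ((f \o shift (y + t *: v)) (h *: v) - f (y + t *: v))).
  apply/funext => h /=; congr (_ *: (f _ - _)).
  rewrite /shift /= -[h%:A]/(h * 1) mulr1 scalerDl addrCA addrA //.
apply: DeriveDef; first by rewrite /derivable E; exact: diff_derivable.
by rewrite /derive E -/(derive f (y + t *: v) v) deriveE.
Qed.

Lemma grad_dot (R : realType) n (f : 'rV[R]_n -> R) (w v : 'rV[R]_n) :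
  differentiable f w -> dot (grad f w) v = 'd f w v.
Proof.
move=> df; rewrite {2}(row_sum_delta v) linear_sum /dot; apply: eq_bigr => h _.
by rewrite linearZ /= mxE -deriveE // mulrC.
Qed.

Lemma dot_uvec (R : realType) n (w : 'rV[R]_n) h : dot w (uvec h) = w 0 h.
Proof.
rewrite /dot (bigD1 h) //= big1 ?addr0; first by rewrite /uvec mxE !eqxx mulr1.
by move=> k kh; rewrite /uvec mxE (negbTE kh) andbF mulr0.
Qed.

Lemma dotB (R : realType) n (w a c : 'rV[R]_n) : dot w (a - c) = dot w a - dot w c.
Proof. by rewrite /dot -sumrB; apply: eq_bigr => h _; rewrite !mxE mulrBr. Qed.

Lemma dotZ (R : realType) n (w a : 'rV[R]_n) k : dot w (k *: a) = k * dot w a.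
Proof. by rewrite /dot mulr_sumr; apply: eq_bigr => h _; rewrite !mxE mulrCA. Qed.

Lemma descent (R : realType) n (f : 'rV[R]_n -> R) (y v : 'rV[R]_n) (Lc : R) :
  (forall w, differentiable f w) ->
  (forall s t : R, `|dot (grad f (y + s *: v)) v - dot (grad f (y + t *: v)) v|
     <= Lc * `|s - t|) ->
  forall s, f (y + s *: v) <= f y + s * dot (grad f y) v + Lc / 2 * s ^+ 2.
Proof.
move=> df hL s.
set c := dot (grad f y) v.
pose psi t := dot (grad f (y + t *: v)) v.
pose h : R -> R := (fun t => f (y + t *: v)) - c *: (@id R) - (Lc / 2) *: ((@id R) * (@id R)).
have hE t : h t = f (y + t *: v) - t * c - Lc / 2 * t ^+ 2.
  by change (f (y + t *: v) - c * t - Lc / 2 * (t * t) = f (y + t *: v) - t * c - Lc / 2 * t ^+ 2); rewrite expr2 [c * t]mulrC.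
have hd (t : R) : is_derive t 1 h (psi t - c - Lc * t).
  apply: is_derive_eq.
    apply: is_deriveB. apply: is_deriveB. exact: phi_derive.
  rewrite /psi grad_dot //.
  change ('d f (y + t *: v) v - c * 1 - (Lc / 2) * (t * 1 + t * 1) = 'd f (y + t *: v) v - c - Lc * t).
  by rewrite !mulr1; field.
have psi0 : psi 0 = c by rewrite /psi scale0r addr0.
have hc a b : {within `[a, b], continuous h}.
  by apply: derivable_within_continuous => x _; case: (hd x).
have h0 : h 0 = f y by rewrite hE scale0r addr0 mul0r expr0n /= mulr0 !subr0.
have bnd (x : R) : - (Lc * `|x|) <= psi x - c <= Lc * `|x|.
  by rewrite -ler_norml -psi0; have := hL x 0; rewrite subr0.
have key : h s <= h 0.
  case: (ltgtP s 0) => [sn|sp|->]; last by [].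
  - have [x /[1!in_itv] /= /andP [x1 x2] E] := MVT sn (fun x _ => hd x) (hc s 0).
    have := bnd x; rewrite ltr0_norm // => /andP [B1 B2].
    nra.
  - have [x /[1!in_itv] /= /andP [x1 x2] E] := MVT sp (fun x _ => hd x) (hc 0 s).
    have := bnd x; rewrite gtr0_norm // => /andP [B1 B2].
    nra.
move: key; rewrite h0 hE; lra.
Qed.
Lemma Delta_gen (R : realType) (e : \bar R) (G Av : R) : e != -oo%E -> 0 < G -> 0 < Av ->
  let D := fine (Order.min (e * (G^-1)%:E)%E Av%:E) in
  ((D * G)%:E <= e)%E /\ (D = Av \/ (D * G)%:E = e) /\ ((0 <= e)%E -> 0 <= D).
Proof.
case: e => [r| |] //= _ G0 A0.
- rewrite -EFinM -EFin_min /= !lee_fin.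
  have [h|h] := leP (r * G^-1) Av.
  + rewrite divfK ?gt_eqF //; split=> //; split; first by right.
    by move=> r0; rewrite divr_ge0 // ltW.
  + split; last by split; [left | move=> _; exact: ltW].
    by move: h; rewrite ltr_pdivlMr // => /ltW.
- rewrite gt0_mulye ?lte_fin ?invr_gt0 // min_r ?leey //=.
  by split=> //; split; [left | move=> _; exact: ltW].
Qed.

Lemma ext_eq_add (R : realType) (e : \bar R) (x r : R) :
  r%:E = (e - x%:E)%E -> e = (x + r)%:E.
Proof. by case: e => [e'| |] //= [->]; congr EFin; ring. Qed.

Lemma ext_eq_sub (R : realType) (e : \bar R) (x r : R) :
  r%:E = (x%:E - e)%E -> e = (x - r)%:E.
Proof. by case: e => [e'| |] //= [->]; congr EFin; ring. Qed.

Lemma ext_le_add (R : realType) (e : \bar R) (x r : R) :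
  (r%:E <= e - x%:E)%E -> ((x + r)%:E <= e)%E.
Proof. by case: e => [e'| |] //=; rewrite ?leey // !lee_fin; lra. Qed.

Lemma ext_le_sub (R : realType) (e : \bar R) (x r : R) :
  (r%:E <= x%:E - e)%E -> (e <= (x - r)%:E)%E.
Proof. by case: e => [e'| |] //=; rewrite ?leNye // !lee_fin; lra. Qed.

Lemma ext_ge0_add (R : realType) (e : \bar R) (x : R) :
  (x%:E <= e)%E -> (0 <= e - x%:E)%E.
Proof. by case: e => [e'| |] //=; rewrite ?leey // !lee_fin; lra. Qed.

Lemma ext_ge0_sub (R : realType) (e : \bar R) (x : R) :
  (e <= x%:E)%E -> (0 <= x%:E - e)%E.
Proof. by case: e => [e'| |] //=; rewrite ?leey // !lee_fin; lra. Qed.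

Lemma ext_sub_neq (R : realType) (e : \bar R) (x : R) :
  e != -oo%E -> (e - x%:E)%E != -oo%E.
Proof. by case: e. Qed.

Lemma ext_sub_neq' (R : realType) (e : \bar R) (x : R) :
  e != +oo%E -> (x%:E - e)%E != -oo%E.
Proof. by case: e. Qed.

Lemma coordZ (R : realType) n (f : 'rV[R]_n -> R) (Z : 'rV[R]_n) (j q : 'I_n) (a : R) h :
  (Z + a *: ddir f Z j q) 0 h = Z 0 h + a * gdir f Z j q * ((h == q)%:R - (h == j)%:R).
Proof. by rewrite /ddir /uvec !mxE /= mulrA. Qed.

Lemma Delta_spec (R : realType) n (f : 'rV[R]_n -> R) (l u : 'I_n -> \bar R)
  (Z : 'rV[R]_n) (j q : 'I_n) (Av : R) :
  (forall i, l i != +oo%E) -> (forall i, u i != -oo%E) -> 0 < Av ->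
  gdir f Z j q != 0 ->
  (Delta f l u Z j q Av = Av \/
   (0 < gdir f Z j q /\
     (u q = (Z 0 q + Delta f l u Z j q Av * gdir f Z j q)%:E \/
      l j = (Z 0 j - Delta f l u Z j q Av * gdir f Z j q)%:E)) \/
   (gdir f Z j q < 0 /\
     (l q = (Z 0 q + Delta f l u Z j q Av * gdir f Z j q)%:E \/
      u j = (Z 0 j - Delta f l u Z j q Av * gdir f Z j q)%:E))) /\
  ((l q <= (Z 0 q)%:E <= u q)%E -> (l j <= (Z 0 j)%:E <= u j)%E ->
    0 <= Delta f l u Z j q Av * `|gdir f Z j q| /\
    (l q <= (Z 0 q + Delta f l u Z j q Av * gdir f Z j q)%:E <= u q)%E /\
    0 <= Delta f l u Z j q Av).
Proof.
move=> hl hu A0 gne0.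
rewrite /Delta /abar /=.
set g := gdir f Z j q.
have [gp|gn|g0] := ltgtP 0 g; last by move: gne0; rewrite -/g -g0 eqxx.
- set a := (u q - (Z 0 q)%:E)%E; set b := ((Z 0 j)%:E - l j)%E.
  have ane : a != -oo%E by exact: ext_sub_neq.
  have bne : b != -oo%E by exact: ext_sub_neq'.
  have mne : Order.min a b != -oo%E by have [] := leP a b.
  have [E1 [E2 E3]] := @Delta_gen _ _ _ _ mne gp A0.
  set D := fine _ in E1 E2 E3 *.
  split.
    case: E2 => [->|E2]; [by left | right; left; split => //].
    move: E2; have [_|_] := leP a b => E2.
      by left; apply: ext_eq_add.
    by right; apply: ext_eq_sub.
  move=> /andP [lq uq] /andP [lj uj].
  have a0 : (0 <= a)%E by exact: ext_ge0_add.
  have b0 : (0 <= b)%E by exact: ext_ge0_sub.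
  have D0 : 0 <= D by apply: E3; have [] := leP a b.
  rewrite gtr0_norm //; split; first exact: mulr_ge0 D0 (ltW gp).
  split => //; apply/andP; split.
    by apply: (le_trans lq); rewrite lee_fin lerDl mulr_ge0 // ltW.
  by apply: ext_le_add; apply: (le_trans E1); rewrite /a /b; have [] := leP (u q - (Z 0 q)%:E)%E ((Z 0 j)%:E - l j)%E => // /ltW.
- set a := ((Z 0 q)%:E - l q)%E; set b := (u j - (Z 0 j)%:E)%E.
  have ane : a != -oo%E by exact: ext_sub_neq'.
  have bne : b != -oo%E by exact: ext_sub_neq.
  have mne : Order.min a b != -oo%E by have [] := leP a b.
  have gp : 0 < `|g| by rewrite normr_gt0 lt_eqF.
  have [E1 [E2 E3]] := @Delta_gen _ _ _ _ mne gp A0.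
  set D := fine _ in E1 E2 E3 *.
  have gE : `|g| = - g by rewrite ltr0_norm.
  rewrite gE in E1 E2.
  split.
    case: E2 => [->|E2]; [by left | right; right; split => //].
    move: E2; have [_|_] := leP a b => E2.
      by left; rewrite (@ext_eq_sub _ _ _ _ E2) mulrN opprK.
    by right; rewrite (@ext_eq_add _ _ _ _ E2) mulrN.
  move=> /andP [lq uq] /andP [lj uj].
  have a0 : (0 <= a)%E by exact: ext_ge0_sub.
  have b0 : (0 <= b)%E by exact: ext_ge0_add.
  have D0 : 0 <= D by apply: E3; have [] := leP a b.
  rewrite gE; split; first by apply: mulr_ge0; rewrite // oppr_ge0 ltW.
  split => //; apply/andP; split; last first.
    apply: (le_trans _ uq); rewrite lee_fin gerDl.
    by rewrite -oppr_ge0 -mulrN mulr_ge0 // oppr_ge0 ltW.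
  have ma : (Order.min a b <= a)%E by have [] := leP a b => // /ltW.
  have := @ext_le_sub _ (l q) (Z 0 q) (D * - g) (le_trans E1 ma).
  by rewrite mulrN opprK.
Qed.

Lemma step_feas (R : realType) n (f : 'rV[R]_n -> R) (l u : 'I_n -> \bar R)
  (gamma delta : R) (Z : 'rV[R]_n) (j q : 'I_n) (Av a : R) :
  (forall i, l i != +oo%E) -> (forall i, u i != -oo%E) -> 0 < delta < 1 -> 0 < Av ->
  (forall h, (l h <= (Z 0 h)%:E <= u h)%E) ->
  (l j < ((Z + a *: ddir f Z j q) 0 j)%:E < u j)%E ->
  linesearch f gamma delta Z (ddir f Z j q) (Delta f l u Z j q Av) a ->
  forall h, (l h <= ((Z + a *: ddir f Z j q) 0 h)%:E <= u h)%E.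
Proof.
move=> hl hu /andP[d0 d1] A0 hZ hj [m [aE _]] h.
have [->|hj'] := eqVneq h j.
  by case/andP: hj => /ltW -> /ltW ->.
rewrite coordZ.
have [hq|hq] := eqVneq h q; last by rewrite (negbTE hj') subrr mulr0 addr0.
subst h; rewrite (negbTE hj') subr0 mulr1.
have [g0|gne] := eqVneq (gdir f Z j q) 0; first by rewrite g0 mulr0 addr0.
have [_ [S2 _]] := (@Delta_spec _ _ f l u Z j q Av hl hu A0 gne).2 (hZ q) (hZ j).
move: S2; rewrite aE.
set D := Delta f l u Z j q Av; set g := gdir f Z j q.
have t0 : 0 <= delta ^+ m by rewrite exprn_ge0 // ltW.
have t1 : delta ^+ m <= 1 by rewrite exprn_ile1 // ltW.
have key : (Z 0 q <= Z 0 q + delta ^+ m * D * g <= Z 0 q + D * g) \/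
           (Z 0 q + D * g <= Z 0 q + delta ^+ m * D * g <= Z 0 q).
  have [w0|w0] := leP 0 (D * g); [left|right]; apply/andP; split; nra.
move=> /andP [S2l S2u]; case/andP: (hZ q) => Zl Zu.
case: key => /andP [k1 k2]; apply/andP; split.
- by apply: (le_trans Zl); rewrite lee_fin.
- by apply: (le_trans _ S2u); rewrite lee_fin.
- by apply: (le_trans S2l); rewrite lee_fin.
- by apply: (le_trans _ Zu); rewrite lee_fin.
Qed.

Lemma main_step (R : realType) n (f : 'rV[R]_n -> R) (l u : 'I_n -> \bar R)
  (gamma delta : R) (Z : 'rV[R]_n) (j q : 'I_n) (Av Al a Lc Lm : R) (xs : 'rV[R]_n) :
  (forall i, l i != +oo%E) -> (forall i, u i != -oo%E) ->
  0 < gamma < 1 -> 0 < delta < 1 -> 0 < Al -> Al <= Av ->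
  (forall w, differentiable f w) ->
  (q != j -> forall s t : R,
     `|dot (grad f (Z + s *: (uvec q - uvec j))) (uvec q - uvec j)
       - dot (grad f (Z + t *: (uvec q - uvec j))) (uvec q - uvec j)|
       <= Lc * `|s - t|) ->
  Lc <= Lm ->
  (forall h, (l h <= (Z 0 h)%:E <= u h)%E) ->
  (l j < ((Z + a *: ddir f Z j q) 0 j)%:E < u j)%E ->
  (l q <= (xs 0 q)%:E <= u q)%E ->
  linesearch f gamma delta Z (ddir f Z j q) (Delta f l u Z j q Av) a ->
  gdir f Z j q * (xs 0 q - (Z + a *: ddir f Z j q) 0 q)
   <= Num.max (Al^-1) (Lm / (2 * delta * (1 - gamma)))
      * `|(Z + a *: ddir f Z j q) 0 q - Z 0 q| * `|xs 0 q - (Z + a *: ddir f Z j q) 0 q|.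
Proof.
move=> hl hu /andP [g0' g1] /andP [d0 d1] Al0 AlA df hL hLm hZ hj hxs hls.
have A0 : 0 < Av by apply: lt_le_trans AlA.
set M := Num.max _ _.
have M0 : 0 <= M by rewrite le_max invr_ge0 ltW.
have [qj|qj] := eqVneq q j.
  subst q; rewrite /gdir subrr mul0r; apply: mulr_ge0 => //; exact: mulr_ge0.
have hq : (Z + a *: ddir f Z j q) 0 q = Z 0 q + a * gdir f Z j q.
  by rewrite coordZ eqxx (negbTE qj) subr0 mulr1.
have hjE : (Z + a *: ddir f Z j q) 0 j = Z 0 j - a * gdir f Z j q.
  by rewrite coordZ eqxx eq_sym (negbTE qj) sub0r mulrN1.
rewrite hjE in hj; rewrite hq addrAC subrr add0r.
set g := gdir f Z j q.
have [g0|gne] := eqVneq g 0.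
  rewrite g0 mul0r; apply: mulr_ge0 => //; exact: mulr_ge0.
set X := xs 0 q - (Z 0 q + a * g).
suff : g * X <= 0 \/ `|g| <= M * `|a * g|.
  case=> [H|H].
    by apply: (le_trans H); apply: mulr_ge0 => //; exact: mulr_ge0.
  apply: (le_trans (ler_norm _)); rewrite normrM.
  by apply: ler_wpM2r => //.
case: hls => m [aE [arm fail]].
case/andP: hxs => xl xu.
case/andP: hj => jl ju.
have [S1 S2] := @Delta_spec _ _ f l u Z j q Av hl hu A0 gne.
set D := Delta f l u Z j q Av in aE fail S1 S2.
case: m aE fail => [|m'] aE fail.
  rewrite expr0 mul1r in aE; subst a.
  case: S1 => [DA|[[gp [E|E]]|[gn [E|E]]]].
  - right; rewrite DA normrM (gtr0_norm A0) mulrA.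
    rewrite -{1}[`|g|]mul1r ler_wpM2r //.
    have MAl : Al^-1 <= M by rewrite /M le_max lexx.
    apply: (le_trans _ (ler_wpM2r (ltW A0) MAl)).
    by rewrite -(ler_pM2l Al0) mulrA mulfV ?gt_eqF // mul1r mulr1.
  - left; rewrite E lee_fin in xu.
    by apply: mulr_ge0_le0; [exact: ltW | rewrite /X subr_le0].
  - by rewrite E lte_fin ltxx in jl.
  - left; rewrite E lee_fin in xl.
    by apply: mulr_le0_ge0; [exact: ltW | rewrite /X subr_ge0].
  - by rewrite E lte_fin ltxx in ju.
right.
have [_ [_ D0]] := S2 (hZ q) (hZ j).
have nf := fail m' (ltnSn m').
set a' := delta ^+ m' * D in nf *.
have a'0 : 0 <= a' by rewrite mulr_ge0 // exprn_ge0 // ltW.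
have a'p : 0 < a'.
  rewrite lt_def a'0 andbT; apply/negP => /eqP a'E; apply: nf.
  by rewrite a'E /armijo scale0r addr0 mulr0 mul0r addr0.
have dd : dot (grad f Z) (ddir f Z j q) = - (g * g).
  rewrite /ddir dotZ dotB !dot_uvec -/g.
  by rewrite /g /gdir /grad !mxE; ring.
have Zd : Z + a' *: ddir f Z j q = Z + (a' * g) *: (uvec q - uvec j).
  by rewrite /ddir scalerA.
have desc := @descent _ _ _ _ _ _ df (hL qj) (a' * g).
rewrite -Zd in desc.
have dv : dot (grad f Z) (uvec q - uvec j) = - g.
  by rewrite dotB !dot_uvec /g /gdir /grad !mxE opprB.
rewrite dv in desc.
have nA : f Z + gamma * a' * dot (grad f Z) (ddir f Z j q) < f (Z + a' *: ddir f Z j q).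
  by rewrite ltNge; apply/negP.
rewrite dd in nA.
have gg : 0 < g * g by rewrite -expr2 exprn_even_gt0.
have P0 : 0 < a' * (g * g) by rewrite mulr_gt0.
have E1 : (a' * g) ^+ 2 = a' * (a' * (g * g)) by rewrite expr2; ring.
rewrite E1 in desc.
have H : f Z + gamma * a' * - (g * g) < f Z + a' * g * - g + Lc / 2 * (a' * (a' * (g * g))).
  exact: (lt_le_trans nA desc).
set P := a' * (g * g) in P0 H *.
have key : (1 - gamma) * P < (Lc / 2 * a') * P.
  have H1 : gamma * a' * - (g * g) = - (gamma * P) by rewrite /P; ring.
  have H2 : a' * g * - g = - P by rewrite /P; ring.
  rewrite H1 H2 in H.
  rewrite mulrBl mul1r -[Lc / 2 * a' * P]mulrA.
  lra.
rewrite ltr_pM2r // in key.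
have aE' : a = delta * a' by rewrite aE exprS -mulrA.
have ap : 0 < a by rewrite aE' mulr_gt0.
set c := 2 * delta * (1 - gamma).
have c0 : 0 < c by rewrite /c !mulr_gt0 // subr_gt0.
have Ka : 1 <= Lm / c * a.
  rewrite mulrAC ler_pdivlMr // mul1r.
  have : c < Lc * a by rewrite /c aE'; nra.
  move=> H3; apply: (le_trans (ltW H3)); by rewrite ler_wpM2r // ltW.
rewrite normrM (gtr0_norm ap) mulrA -{1}[`|g|]mul1r ler_wpM2r //.
apply: (le_trans Ka); apply: ler_wpM2r; first exact: ltW.
by rewrite /M le_max lexx orbT.
Qed.

Lemma bigmax_ge (R : realType) n (F : 'I_n -> R) i : F i <= \big[Num.max/0]_(k < n) F k.
Proof.
have gen : forall s, i \in s -> F i <= \big[Num.max/0]_(k <- s) F k.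
  elim=> [//|x s IH]; rewrite in_cons big_cons le_max => /orP [/eqP->|/IH->];
  by rewrite ?lexx ?orbT.
by apply: gen; rewrite mem_index_enum.
Qed.

Theorem lemma5 (R : realType) (n : nat) (f : 'rV[R]_n -> R) (b : R)
  (l u : 'I_n -> \bar R) (L : 'I_n -> 'I_n -> R)
  (tau gamma delta Al Au : R)
  (x : nat -> 'rV[R]_n) (jk : nat -> 'I_n) (p : nat -> {perm 'I_n})
  (A : nat -> nat -> R) (alpha : nat -> nat -> R)
  (z : nat -> nat -> 'rV[R]_n) :
  (2 <= n)%N ->
  (* bounds: l_i in R U {-oo}, u_i in R U {+oo}, l_i < u_i *)
  (forall i, l i != +oo%E) -> (forall i, u i != -oo%E) ->
  (forall i, (l i < u i)%E) ->
  (* f continuously differentiable with Lipschitz gradient *)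
  (forall y : 'rV[R]_n, differentiable f y) ->
  continuous (grad f) ->
  (exists Lg : R, forall y w : 'rV[R]_n,
      `|grad f y - grad f w| <= Lg * `|y - w|) ->
  (* the constants L_{i,j} *)
  (forall i j, i != j -> 0 < L i j) ->
  (forall i, L i i = 0) ->
  (forall (i j : 'I_n) (y : 'rV[R]_n) (s t : R),
      i != j ->
      `|dot (grad f (y + s *: (uvec i - uvec j))) (uvec i - uvec j)
        - dot (grad f (y + t *: (uvec i - uvec j))) (uvec i - uvec j)|
        <= L i j * `|s - t|) ->
  (* parameters *)
  0 < tau <= 1 -> 0 < gamma < 1 -> 0 < delta < 1 -> 0 < Al -> Al <= Au ->
  (* starting point and standing assumptions *)
  feasible l u b (x 0%N) ->
  let L0 : set 'rV[R]_n := fun y => feasible l u b y /\ f y <= f (x 0%N) in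
  (exists y, L0 y) -> compact L0 ->
  (forall y, L0 y -> exists i, (l i < (y 0 i)%:E < u i)%E) ->
  (* the run of AC2CD, with the additional requirement on A^{k,i} *)
  AC2CD_run f l u tau gamma delta Al Au x jk p A alpha z ->
  (forall k (i : nat), (i <= n)%N ->
      (l (jk k) < (z k i 0 (jk k))%:E < u (jk k))%E) ->
  let Lmax := \big[Num.max/0]_(i < n) \big[Num.max/0]_(j < n) L i j in
  forall xs : 'rV[R]_n, stationary f l u b xs ->
  forall (k : nat) (i : 'I_n),
    let q := p k i in
    gdir f (z k i) (jk k) q * (xs 0 q - z k i.+1 0 q)
      <= Num.max (Al^-1) (Lmax / (2 * delta * (1 - gamma)))
         * `|z k i.+1 0 q - z k i 0 q| * `|xs 0 q - z k i.+1 0 q|.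
Proof.
move=> n2 hl hu hlu dfA cg hLg hLpos hLii hLij tau01 gam del Al0 AlAu fx0 L0 hL0 cL0 hL0i
  run hint Lmax xs [fxs _] k i; cbv zeta.
case: run => [Hz0 [Hxz [_ [HA [Hls Hstep]]]]].
have Apos : forall k (i : 'I_n), 0 < A k i.
  by move=> k' i'; case/andP: (HA k' i') => H _; exact: lt_le_trans H.
have inner : forall k, (forall h, (l h <= (x k 0 h)%:E <= u h)%E) ->
    forall i : nat, (i <= n)%N -> forall h, (l h <= (z k i 0 h)%:E <= u h)%E.
  move=> k' hx; elim => [_|i' IHi] hi.
    by rewrite Hz0.
  pose io : 'I_n := Ordinal hi.
  have E : z k' i'.+1 = z k' i' + alpha k' io *: ddir f (z k' i') (jk k') (p k' io)
    := Hstep k' io.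
  rewrite E; apply: (@step_feas _ _ f l u gamma delta _ _ _ (A k' io)) => //.
  - exact: IHi (ltnW hi).
  - by rewrite -E; apply: hint.
  - exact: Hls k' io.
have feas : forall k (i : nat), (i <= n)%N -> forall h, (l h <= (z k i 0 h)%:E <= u h)%E.
  elim => [|k' IHk] i' hi.
    by apply: inner => //; case: fx0.
  apply: inner => // h; rewrite Hxz; exact: IHk.
have E : z k i.+1 = z k i + alpha k i *: ddir f (z k i) (jk k) (p k i) := Hstep k i.
rewrite E.
apply: (@main_step _ _ f l u gamma delta (z k i) (jk k) (p k i) (A k i) Al (alpha k i)
          (L (p k i) (jk k)) Lmax xs) => //.
- by case/andP: (HA k i).
- by move=> qj s t; apply: hLij.
- rewrite /Lmax; have H1 := @bigmax_ge _ _ (fun j => L (p k i) j) (jk k); have H2 := @bigmax_ge _ _ (fun i => \big[Num.max/0]_(j < n) L i j) (p k i); exact: (le_trans H1 H2).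
- by apply: feas; exact: ltnW (ltn_ord i).
- by rewrite -E; apply: hint; exact: ltn_ord i.
- by case: fxs.
Qed.
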